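(* Let $n\ge p$, $\nu>0$, $\boldsymbol\eta=(\eta_1,\dots,\eta_p)\in\mathbb R^p$, and for $\boldsymbol d\in\mathbb R_+^p$ with $D=\mathrm{diag}(\boldsymbol d)$ set $$g(\boldsymbol d;\nu,\boldsymbol\eta)=\frac{\exp(\nu\,\boldsymbol\eta^T\boldsymbol d)}{\left[{}_0F_1\!\left(\tfrac n2,\tfrac{D^2}{4}\right)\right]^\nu}.$$ Then $\int_{\mathbb R_+^p}g(\boldsymbol d;\nu,\boldsymbol\eta)\,d\boldsymbol d<\infty$ if and only if $\max_{1\le j\le p}\eta_j<1$.
   Context: $\mathbb R_+^p=(0,\infty)^p$ with Lebesgue measure. $\mathcal V_{n,p}=\{X\in\mathbb R^{n\times p}:X^TX=I_p\}$ with normalized Haar probability measure $[dX]$; for diagonal $D$ with diagonal $\boldsymbol d$, ${}_0F_1\!\left(\tfrac n2,\tfrac{D^2}{4}\right)=\int_{\mathcal V_{n,p}}\exp\big(\sum_j d_jX_{jj}\big)[dX]$. *)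

(* Defs.v *)
From HB Require Import structures.
From mathcomp Require Import all_boot all_order all_algebra.
From mathcomp Require Import all_classical all_reals all_analysis.
Set Implicit Arguments. Unset Strict Implicit. Unset Printing Implicit Defensive.
Import Order.TTheory GRing.Theory Num.Theory.
Local Open Scope classical_set_scope.
Local Open Scope ring_scope.

(* n x p real matrices, represented as n rows, each a p-tuple; this type
   carries MathComp-Analysis's product sigma-algebra (Borel on R^{n*p}). *)
Notation rmat R n p := (n.-tuple (p.-tuple R)) (only parsing).

Definition mx_of (R : realType) (n p : nat) (t : rmat R n p) : 'M[R]_(n, p) :=
  \matrix_(i < n, j < p) tnth (tnth t i) j.

Definition rmat_of (R : realType) (n p : nat) (M : 'M[R]_(n, p)) : rmat R n p :=
  [tuple [tuple M i j | j < p] | i < n].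

Definition stiefel (R : realType) (n p : nat) : set (rmat R n p) :=
  [set t | (mx_of t)^T *m mx_of t = 1%:M].

(* mu is the normalized Haar (uniform) probability measure on V_{n,p}:
   a probability measure concentrated on V_{n,p} and invariant under
   X |-> Q X for every orthogonal Q in O(n).  Since O(n) acts transitively
   on V_{n,p}, such a measure is unique. *)
Definition stiefel_haar (R : realType) (n p : nat)
  (mu : probability (rmat R n p) R) : Prop :=
  mu.-negligible (~` @stiefel R n p) /\
  forall (Q : 'M[R]_n), Q^T *m Q = 1%:M ->
    forall A : set (rmat R n p), measurable A ->
      mu ((fun t => rmat_of (Q *m mx_of t)) @^-1` A) = mu A.

Definition diag_entry (R : realType) (n p : nat) (hnp : (p <= n)%N)
  (t : rmat R n p) (j : 'I_p) : R :=
  tnth (tnth t (widen_ord hnp j)) j.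

(* 0F1(n/2; D^2/4) = \int_{V_{n,p}} exp(sum_j d_j X_jj) [dX] *)
Definition hyp0F1 (R : realType) (n p : nat) (hnp : (p <= n)%N)
  (mu : probability (rmat R n p) R) (d : p.-tuple R) : \bar R :=
  (\int[mu]_(t in [set: rmat R n p])
     (expR (\sum_(j < p) tnth d j * diag_entry hnp t j))%:E)%E.

Definition g_fun (R : realType) (n p : nat) (hnp : (p <= n)%N)
  (mu : probability (rmat R n p) R) (nu : R) (eta d : p.-tuple R) : R :=
  expR (nu * \sum_(j < p) tnth eta j * tnth d j)
    / (fine (hyp0F1 hnp mu d)) `^ nu.

(* Lebesgue integral over R_+^p = (0,oo)^p of a nonnegative function,
   computed as the iterated integral (Tonelli) of one-dimensional Lebesgue
   integrals, since the library has no p-fold product Lebesgue measure on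
   tuples. *)
Fixpoint int_Rplus (R : realType) (k : nat) : (k.-tuple R -> \bar R) -> \bar R :=
  match k return (k.-tuple R -> \bar R) -> \bar R with
  | 0%N => fun f => f [tuple]
  | k'.+1 => fun f =>
      (\int[@lebesgue_measure R]_(x in `]0%R, +oo[)
          int_Rplus (fun t : k'.-tuple R => f [tuple of x :: t]))%E
  end.

(* Main.v *)
Require Import Defs.
From HB Require Import structures.
From mathcomp Require Import all_boot all_order all_algebra.
From mathcomp Require Import all_classical all_reals all_analysis.
From mathcomp Require Import measurable_realfun.
From mathcomp Require Import ring lra.
Import Order.TTheory GRing.Theory Num.Theory.
Set Implicit Arguments. Unset Strict Implicit. Unset Printing Implicit Defensive.
Local Open Scope classical_set_scope.
Local Open Scope ring_scope.
Local Open Scope ereal_scope.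
Lemma le_int_nm d (T: measurableType d) (R : realType) (mu : {measure set T -> \bar R}) (D : set T) (f g : T -> \bar R) :
  (forall x, D x -> 0 <= f x) -> (forall x, D x -> f x <= g x) ->
  \int[mu]_(x in D) f x <= \int[mu]_(x in D) g x.
Proof.
move=> f0 fg.
have g0 : forall x, D x -> 0 <= g x by move=> x Dx; exact: le_trans (f0 x Dx) (fg x Dx).
rewrite (ge0_integralE _ f0) (ge0_integralE _ g0).
apply: le_ereal_sup => _ [h hf <-]; exists h => //= x.
apply: le_trans (hf x) _.
rewrite /patch; case: ifP => // /set_mem Dx; exact: fg.
Qed.

Definition posT (R : realType) k (d : k.-tuple R) := forall j, (0 < tnth d j)%R.

Lemma posT_cons (R : realType) k (x : R) (t : k.-tuple R) :
  (0 < x)%R -> posT t -> posT [tuple of x :: t].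
Proof.
move=> x0 pt j; case: (unliftP ord0 j) => [i ->|->].
  by rewrite tnthS.
by rewrite (tnth_nth x) /=.
Qed.

Lemma int_Rplus_ge0 (R : realType) k (f : k.-tuple R -> \bar R) :
  (forall d, posT d -> 0 <= f d) -> 0 <= int_Rplus f.
Proof.
elim: k f => [|k IH] f f0 /=.
  by apply: f0 => -[].
apply: integral_ge0 => x; rewrite /= in_itv /= andbT => x0.
apply: IH => t pt; apply: f0; exact: posT_cons.
Qed.

Lemma int_Rplus_le (R : realType) k (f g : k.-tuple R -> \bar R) :
  (forall d, posT d -> 0 <= f d) -> (forall d, posT d -> f d <= g d) ->
  int_Rplus f <= int_Rplus g.
Proof.
elim: k f g => [|k IH] f g f0 fg /=.
  by apply: fg => -[].
apply: le_int_nm => x; rewrite /= in_itv /= andbT => x0.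
  apply: int_Rplus_ge0 => t pt; apply: f0; exact: posT_cons.
apply: IH => t pt; [apply: f0|apply: fg]; exact: posT_cons.
Qed.
Definition J (R : realType) (a : R) :=
  \int[@lebesgue_measure R]_(x in `]0%R, +oo[) (expR (a * x))%:E.

Lemma mexpa (R : realType) (a : R) (D : set R) :
  measurable_fun D (fun x : R => (expR (a * x))%:E).
Proof.
apply/measurable_EFinP; apply: measurableT_comp => //.
Qed.

Lemma J_neg (R : realType) (a : R) : (a < 0)%R -> J a = ((- a)^-1)%:E.
Proof.
move=> a0; set r := (- a)%R; have r0 : (0 < r)%R by rewrite oppr_gt0.
rewrite /J integral_itv_obnd_cbnd; last exact: mexpa.
transitivity (\int[lebesgue_measure]_(x in `[0%R, +oo[) ((r^-1)%:E * (r * expR (- r * x))%:E)).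
  apply: eq_integral => x _; rewrite -EFinM mulrA mulVf ?gt_eqF// mul1r.
  by rewrite /r opprK.
rewrite ge0_integralZl_EFin//; last 3 first.
- by move=> x _; rewrite lee_fin mulr_ge0 ?expR_ge0// ltW.
- apply/measurable_EFinP; apply: measurable_funM => //.
  apply: measurableT_comp => //; exact: measurable_funM.
- by rewrite invr_ge0 ltW.
rewrite integral_mkcond.
rewrite (_ : _ \_ _ = fun x => (exponential_pdf r x)%:E).
  by rewrite integral_exponential_pdf// mule1.
apply/funext => x; rewrite /exponential_pdf /patch; by case: ifP.
Qed.

Lemma J_pos (R : realType) (a : R) : (0 <= a)%R -> J a = +oo.
Proof.
move=> a0; apply/eqP; rewrite eq_le leey /=.
have h : \int[@lebesgue_measure R]_(x in `]0%R, +oo[) (1%R)%:E <= J a.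
  apply: le_int_nm => x; rewrite /= in_itv /= andbT => x0 //.
  by rewrite lee_fin -expR0 ler_expR mulr_ge0// ltW.
apply: le_trans h.
rewrite integral_cst// mul1e.
have := lebesgue_measure_itv `]0%R, +oo[%R.
by rewrite /= => ->; rewrite ltry.
Qed.

Lemma J_gt0 (R : realType) (a : R) : 0 < J a.
Proof.
have [a0|a0] := ltP a 0%R.
  by rewrite J_neg// lte_fin invr_gt0 oppr_gt0.
by rewrite J_pos.
Qed.
Lemma int_Rplus_ext (R : realType) k (f g : k.-tuple R -> \bar R) :
  f =1 g -> int_Rplus f = int_Rplus g.
Proof. by move=> /funext ->. Qed.

Lemma int_Rplus_exp (R : realType) k (a : nat -> R) (c : R) : (0 <= c)%R ->
  int_Rplus (fun d : k.-tuple R => (c * expR (\sum_(j < k) a j * tnth d j))%:E)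
  = c%:E * \prod_(j < k) J (a j).
Proof.
elim: k a c => [|k IH] a c c0.
  by rewrite /= big_ord0 big_ord0 expR0 mulr1 mule1.
rewrite /=.
transitivity (\int[@lebesgue_measure R]_(x in `]0%R, +oo[)
   ((c * expR (a 0%N * x))%:E * \prod_(j < k) J (a j.+1))).
  apply: eq_integral => x _.
  rewrite -(IH (fun j => a j.+1)); last by rewrite mulr_ge0 ?expR_ge0.
  apply: int_Rplus_ext => t.
  rewrite big_ord_recl /= -mulrA -expRD; congr (_ * expR (_ + _))%:E.
  by apply: eq_bigr => i _; rewrite tnthS.
rewrite ge0_integralZr//; last 3 first.
- apply/measurable_EFinP; apply: measurable_funM => //.
  by apply: measurableT_comp => //; exact: measurable_funM.
- by move=> x _; rewrite lee_fin mulr_ge0 ?expR_ge0.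
- by apply: prode_ge0 => i _; exact: ltW (J_gt0 _).
under eq_integral do rewrite EFinM.
rewrite ge0_integralZl_EFin//; first by rewrite big_ord_recl -muleA.
all: try exact: mexpa.
all: by move=> x _; rewrite lee_fin expR_ge0.
Qed.
Lemma prodJ_gt0 (R : realType) k (a : nat -> R) : 0 < \prod_(j < k) J (a j).
Proof.
elim: k a => [|k IH] a; first by rewrite big_ord0 lte01.
by rewrite big_ord_recl mule_gt0// ?J_gt0// (IH (fun j => a j.+1)).
Qed.

Lemma prodJ_fin (R : realType) k (a : nat -> R) :
  (forall j, (j < k)%N -> (a j < 0)%R) -> \prod_(j < k) J (a j) < +oo.
Proof.
move=> ha; rewrite (eq_bigr (fun j : 'I_k => ((- a j)^-1)%:E)).
  by rewrite prodEFin ltry.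
by move=> j _; rewrite J_neg// ha.
Qed.

Lemma prodJ_inf (R : realType) k (a : nat -> R) j :
  (j < k)%N -> (0 <= a j)%R -> \prod_(j < k) J (a j) = +oo.
Proof.
elim: k a j => [|k IH] a j //= jk aj.
rewrite big_ord_recl; case: j jk aj => [|j] jk aj.
  by rewrite J_pos// gt0_mulye// (prodJ_gt0 _ (fun j => a j.+1)).
by rewrite (IH (fun j => a j.+1) j)// gt0_muley// J_gt0.
Qed.
Section House.
Local Open Scope ring_scope.
Variable R : realType.

Lemma sum_delta n (j : 'I_n) (F : 'I_n -> R) :
  \sum_(i < n) ((i == j)%:R * F i) = F j.
Proof.
rewrite (bigD1 j) //= eqxx mul1r big1 ?addr0 // => i /negbTE ->.
by rewrite mul0r.
Qed.

Lemma sum_delta_nat n (j : nat) (F : 'I_n -> R) (hj : (j < n)%N) :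
  \sum_(i < n) (((i : nat) == j)%:R * F i) = F (Ordinal hj).
Proof.
rewrite -(sum_delta (Ordinal hj)); apply: eq_bigr => i _.
by congr (_%:R * _).
Qed.

Definition orthm n (Q : 'M[R]_n) := Q^T *m Q = 1%:M.

Lemma orthm_mul n (A B : 'M[R]_n) : orthm A -> orthm B -> orthm (A *m B).
Proof.
rewrite /orthm => hA hB; rewrite trmx_mul -mulmxA (mulmxA A^T) hA mul1mx //.
Qed.

Definition hh n (v : 'I_n -> R) (s : R) : 'M[R]_n :=
  \matrix_(i, l) ((i == l)%:R - 2 / s * v i * v l).

Lemma hh_orth n (v : 'I_n -> R) (s : R) :
  s = \sum_i v i ^+ 2 -> s != 0 -> orthm (hh v s).
Proof.
move=> hs s0; rewrite /orthm; apply/matrixP => i l; rewrite !mxE.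
transitivity (\sum_m (((m == i)%:R - 2 / s * v m * v i) *
                      ((m == l)%:R - 2 / s * v m * v l))).
  by apply: eq_bigr => m _; rewrite !mxE.
set c := 2 / s.
transitivity (\sum_m ((m == i)%:R * (m == l)%:R - (m == l)%:R * (c * v i * v m)
   - (m == i)%:R * (c * v l * v m) + (c * c * v i * v l) * v m ^+ 2)).
  by apply: eq_bigr => m _; ring.
rewrite !big_split /= !sumrN !sum_delta -mulr_sumr -hs.

have e : c * c * v i * v l * s = 2 * (c * v i * v l).
  by rewrite /c; field.
rewrite e; ring.
Qed.

Lemma hh_mul n m (v : 'I_n -> R) (s : R) (Z : 'M[R]_(n, m)) i j :
  (hh v s *m Z) i j = Z i j - 2 / s * v i * \sum_l (v l * Z l j).
Proof.
rewrite !mxE.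
under eq_bigr do rewrite !mxE mulrBl.
rewrite big_split /= sumrN.
under eq_bigr do rewrite eq_sym.
rewrite sum_delta mulr_sumr; congr (_ - _); apply: eq_bigr => l _; ring.
Qed.

Lemma house_gen n p (Y : 'M[R]_(n, p)) k : (k <= p)%N -> (p <= n)%N ->
  Y^T *m Y = 1%:M -> exists Q : 'M[R]_n, orthm Q /\
    (forall (i : 'I_n) (j : 'I_p), (j < k)%N -> (Q *m Y) i j = ((i : nat) == j)%:R).
Proof.
move=> + pn hY; elim: k => [_|k IH kp].
  by exists 1%:M; split => //; rewrite /orthm trmx1 mul1mx.
have [Q [oQ hQ]] := IH (ltnW kp).
set Z := Q *m Y.
have hZ : Z^T *m Z = 1%:M.
  by rewrite /Z trmx_mul -mulmxA (mulmxA Q^T) oQ mul1mx.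
have kn : (k < n)%N := leq_trans kp pn.
pose jk : 'I_p := Ordinal kp.
pose ik : 'I_n := Ordinal kn.
pose z (i : 'I_n) : R := Z i jk.
have ZtZ : forall a b : 'I_p, \sum_l (Z l a * Z l b) = (a == b)%:R.
  move=> a b; have := congr1 (fun M : 'M[R]_p => M a b) hZ; rewrite !mxE => <-.
  by apply: eq_bigr => l _; rewrite [X in _ = X * _]mxE.
have F1 : \sum_l z l ^+ 2 = 1.
  transitivity ((jk == jk)%:R : R); last by rewrite eqxx.
  by rewrite -ZtZ; apply: eq_bigr => l _; rewrite expr2.
have F2 : forall i : 'I_n, (i < k)%N -> z i = 0.
  move=> i ik'; have ip : (i < p)%N := ltn_trans ik' kp.
  have := ZtZ (Ordinal ip) jk.
  have -> : (Ordinal ip == jk) = false.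
    by apply/negbTE; rewrite -val_eqE /= neq_ltn ik'.
  rewrite (eq_bigr (fun l : 'I_n => (((l : nat) == i)%:R * z l))).
    by rewrite sum_delta_nat (_ : Ordinal _ = i) //; exact: val_inj.
  by move=> l _; rewrite hQ.
pose v (i : 'I_n) : R := z i - ((i : nat) == k)%:R.
pose s := \sum_i v i ^+ 2.
have hs : s = 2 - 2 * z ik.
  rewrite /s (eq_bigr (fun i : 'I_n => z i ^+ 2 - 2 * (((i : nat) == k)%:R * z i)
       + ((i : nat) == k)%:R * ((i : nat) == k)%:R)).
    rewrite !big_split /= F1 sumrN -mulr_sumr !(sum_delta_nat _ kn) /= eqxx /= -/ik.
    ring.
  move=> i _; rewrite /v; ring.
have w : forall j : 'I_p, \sum_l (v l * Z l j) = (jk == j)%:R - Z ik j.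
  move=> j; rewrite -ZtZ.
  rewrite (eq_bigr (fun l : 'I_n => Z l jk * Z l j - ((l : nat) == k)%:R * Z l j)).
    by rewrite big_split /= sumrN sum_delta_nat.
  by move=> l _; rewrite /v /z; ring.
have [s0|s0] := eqVneq s 0.
  have v0 : forall i, v i = 0.
    move=> i; have := (psumr_eq0P _ s0) i isT.
    by move=> /(_ (fun i _ => sqr_ge0 (v i))) /eqP; rewrite sqrf_eq0 => /eqP.
  exists Q; split => // i j; rewrite ltnS leq_eqVlt => /orP[/eqP jk'|]; last exact: hQ.
  have -> : j = jk by apply: val_inj.
  by have := v0 i; rewrite /v /z => /eqP; rewrite subr_eq0 => /eqP ->.
exists (hh v s *m Q); split.
  by apply: orthm_mul => //; exact: hh_orth.
move=> i j; rewrite ltnS leq_eqVlt => /orP[/eqP jk'|jlt].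
  have -> : j = jk by apply: val_inj.
  rewrite -mulmxA -/Z hh_mul w eqxx.
  have hz : 1 - Z ik jk != 0.
    apply: contraNneq s0 => h; rewrite hs /z.
    have -> : Z ik jk = 1 by apply/eqP; rewrite eq_sym -subr_eq0 h.
    by rewrite mulr1 subrr.
  rewrite hs /v /z /=.
  have e : 2 / (2 - 2 * Z ik jk) * (1 - Z ik jk) = 1.
    by field; rewrite -[X in X - _]mulr1 -mulrBr mulf_neq0 // pnatr_eq0.
  rewrite mulrAC e mul1r; ring.
rewrite -mulmxA -/Z hh_mul w.
have -> : (jk == j) = false.
  by apply/negbTE; rewrite -val_eqE /= neq_ltn jlt orbT.
have -> : Z ik j = 0 by rewrite /Z hQ // /= gtn_eqF.
by rewrite subrr mulr0 subr0 /Z hQ.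
Qed.

End House.
Section Meas.
Local Open Scope ring_scope.
Variables (R : realType) (n p : nat).

Lemma rmat_ofE (M : 'M[R]_(n, p)) i j : tnth (tnth (rmat_of M) i) j = M i j.
Proof. by rewrite /rmat_of !tnth_mktuple. Qed.

Lemma mx_ofE (t : rmat R n p) i j : mx_of t i j = tnth (tnth t i) j.
Proof. by rewrite /mx_of mxE. Qed.

Lemma meas_ent i j : measurable_fun setT (fun t : rmat R n p => tnth (tnth t i) j).
Proof.
apply: (measurableT_comp (measurable_tnth j) (measurable_tnth i)).
Qed.

Lemma meas_lin (Q : 'M[R]_n) i j :
  measurable_fun setT (fun t : rmat R n p => (Q *m mx_of t) i j).
Proof.
rewrite (_ : (fun t => _) = fun t : rmat R n p => \sum_(k <- index_enum 'I_n) (Q i k * tnth (tnth t k) j)).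
  apply: measurable_sum => k; apply: measurable_funM => //.
  exact: meas_ent.
by apply/funext => t; rewrite mxE; apply: eq_bigr => k _; rewrite mx_ofE.
Qed.

Lemma meas_itvs (I : finType) (f : I -> rmat R n p -> R) (J : I -> interval R) :
  (forall i, measurable_fun setT (f i)) ->
  measurable [set t | forall i, f i t \in J i].
Proof.
move=> mf.
rewrite (_ : [set t | _] = \bigcap_(i in [set: I]) (f i @^-1` [set` J i])).
  apply: fin_bigcap_measurable; first exact: finite_finset.
  move=> i _; rewrite -(setTI (_ @^-1` _)); exact: mf.
apply/seteqP; split => t /= h.
  by move=> i _; exact: h.
by move=> i; exact: h.
Qed.

End Meas.
Section Bound.
Local Open Scope ring_scope.
Variable R : realType.
Lemma col_bound m k (M : 'M[R]_(m, k)) : M^T *m M = 1%:M ->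
  forall a b, `|M a b| <= 1.
Proof.
move=> hM a b.
have h1 : \sum_l M l b ^+ 2 = 1.
  have := congr1 (fun N : 'M[R]_k => N b b) hM; rewrite !mxE eqxx /= mulr1n => <-.
  by apply: eq_bigr => l _; rewrite mxE expr2.
have h2 : M a b ^+ 2 <= 1.
  rewrite -h1 (bigD1 a) //= lerDl; apply: sumr_ge0 => l _; exact: sqr_ge0.
rewrite ler_norml; apply/andP; split; nra.
Qed.
End Bound.
Section Haar.
Local Open Scope ring_scope.
Variables (R : realType) (n p : nat) (hnp : (p <= n)%N).
Variable (mu : probability (rmat R n p) R).
Hypothesis hmu : stiefel_haar mu.

Definition Uset (c : R) : set (rmat R n p) :=
  [set t | forall j : 'I_p, diag_entry hnp t j \in `[c, +oo[].

Lemma mUset c : measurable (Uset c).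
Proof. by apply: meas_itvs => j; exact: meas_ent. Qed.

Definition box (δ : R) (z : {ffun 'I_n * 'I_p -> int}) : set (rmat R n p) :=
  [set t | forall ij : 'I_n * 'I_p, tnth (tnth t ij.1) ij.2 \in
     `](z ij)%:~R * δ - δ, (z ij)%:~R * δ + δ[].

Lemma mbox δ z : measurable (box δ z).
Proof. by apply: meas_itvs => ij; exact: meas_ent. Qed.

Definition Fb δ (k : nat) : set (rmat R n p) :=
  if (unpickle k : option {ffun 'I_n * 'I_p -> int}) is Some z then box δ z else set0.

Lemma mFb δ k : measurable (Fb δ k).
Proof. rewrite /Fb; case: unpickle => [z|//]; exact: mbox. Qed.

Lemma Fb_cover δ : 0 < δ -> [set: rmat R n p] `<=` \bigcup_k Fb δ k.
Proof.
move=> d0 t _.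
pose z : {ffun 'I_n * 'I_p -> int} :=
  [ffun ij => Num.floor (tnth (tnth t ij.1) ij.2 / δ)].
exists (pickle z) => //; rewrite /Fb pickleK => ij; rewrite ffunE in_itv /=.
set x := tnth (tnth t ij.1) ij.2.
have := floor_itv (x / δ); rewrite intrD /=.
set F := (Num.floor (x / δ))%:~R => /andP[h1 h2].
have hx : x = x / δ * δ by rewrite divfK ?gt_eqF.
apply/andP; split; nra.
Qed.

Lemma exists_pos_box δ : 0 < δ -> exists z, (0 < mu (box δ z))%E.
Proof.
move=> d0; apply: contrapT => hn.
have h0 : forall k, mu (Fb δ k) = 0%E.
  move=> k; rewrite /Fb; case: unpickle => [z|]; last exact: measure0.
  apply/eqP; rewrite eq_le measure_ge0 andbT leNgt; apply/negP => h.
  by apply: hn; exists z.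
have := @measure_sigma_subadditive _ _ _ mu setT (Fb δ) (mFb δ) measurableT (Fb_cover d0).
rewrite eseries0; last by move=> i _ _; exact: h0.
move=> h; have h1 := probability_setT mu.
have : (1 <= (0 : \bar R))%E; last by rewrite lee_fin ler10.
by rewrite -[X in (X <= _)%E]h1; exact: h.
Qed.

Lemma U_pos eps : 0 < eps -> (0 < mu (Uset (1 - eps)))%E.
Proof.
move=> e0.
set m : R := n%:R.
have m0 : 0 <= m by rewrite /m ler0n.
set δ := eps / (2 * m + 1).
have hδm : 2 * m + 1 != 0 by rewrite gt_eqF // ltr_pwDr // mulr_ge0.
have hδ : δ * (2 * m + 1) = eps by rewrite /δ divfK.
have d0 : 0 < δ by rewrite /δ divr_gt0 // ltr_pwDr // mulr_ge0.
have hd1 : m * (2 * δ) <= eps by nra.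
have [z hz] := exists_pos_box d0.
have [N [mN muN hN]] := hmu.1.
have [Y [bY nY]] : exists Y, box δ z Y /\ ~ N Y.
  apply: contrapT => h.
  have sub : box δ z `<=` N.
    move=> t bt; apply: contrapT => nt; apply: h; by exists t.
  have hle := le_measure mu (mem_set (mbox δ z)) (mem_set mN) sub.
  have : (0 < (0 : \bar R))%E; last by rewrite ltxx.
  rewrite -[X in (_ < X)%E]muN; exact: lt_le_trans hz hle.
have sY : stiefel Y by apply: contrapT => ns; exact: nY (hN _ ns).
have [Q [oQ hQ]] := house_gen (k := p) (leqnn p) hnp sY.
set P := (fun t => rmat_of (Q *m mx_of t)) @^-1` Uset (1 - eps).
have eqP : P = [set t | forall j : 'I_p,
    (Q *m mx_of t) (widen_ord hnp j) j \in `[1 - eps, +oo[].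
  by apply/funext => t; rewrite /P /Uset /preimage /diag_entry /=;
     under eq_forall do rewrite rmat_ofE.
have mP : measurable P by rewrite eqP; apply: meas_itvs => j; exact: meas_lin.
have sub : box δ z `<=` P.
  move=> t bt; rewrite eqP /= => j; rewrite in_itv /= andbT.
  set w := widen_ord hnp j.
  have e : (Q *m mx_of t) w j = (Q *m mx_of Y) w j +
      \sum_k Q w k * (mx_of t k j - mx_of Y k j).
    by rewrite !mxE -big_split; apply: eq_bigr => k _ /=; ring.
  have e1 : (Q *m mx_of Y) w j = 1 by rewrite hQ // /= eqxx.
  have b : `|\sum_k Q w k * (mx_of t k j - mx_of Y k j)| <= m * (2 * δ).
    apply: le_trans (ler_norm_sum _ _ _) _.
    rewrite /m mulr_natl -[X in _ *+ X](card_ord n) -sumr_const.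
    apply: ler_sum => k _; rewrite normrM -[2 * δ]mul1r.
    apply: ler_pM => //; first exact: col_bound oQ w k.
    have := bt (k, j); have := bY (k, j); rewrite /= !in_itv /= !mx_ofE.
    move=> /andP[y1 y2] /andP[t1 t2].
    rewrite ler_norml; apply/andP; split; lra.
  move: b; rewrite e e1 ler_norml => /andP[b1 _]; lra.
rewrite -(hmu.2 Q oQ _ (mUset _)) -/P.
have hle := le_measure mu (mem_set (mbox δ z)) (mem_set mP) sub.
exact: lt_le_trans hz hle.
Qed.

End Haar.
Section F01.
Local Open Scope ring_scope.
Variables (R : realType) (n p : nat) (hnp : (p <= n)%N).
Variable (mu : probability (rmat R n p) R).
Hypothesis hmu : stiefel_haar mu.

Lemma meas_integrand (d : p.-tuple R) :
  measurable_fun setT (fun t : rmat R n p =>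
     (expR (\sum_(j < p) tnth d j * diag_entry hnp t j))%:E).
Proof.
apply/measurable_EFinP; apply: measurableT_comp => //.
apply: measurable_sum => j; apply: measurable_funM => //; exact: meas_ent.
Qed.

Lemma ae_stiefel : \forall x \ae mu, stiefel x.
Proof.
have [N [mN muN hN]] := hmu.1.
exists N; split => //.
Qed.

Lemma F_upper (d : p.-tuple R) : posT d ->
  (hyp0F1 hnp mu d <= (expR (\sum_(j < p) tnth d j))%:E)%E.
Proof.
move=> pd; rewrite /hyp0F1.
have h := @ae_ge0_le_integral _ _ _ mu setT measurableT
  (fun t : rmat R n p => (expR (\sum_(j < p) tnth d j * diag_entry hnp t j))%:E)
  (fun _ => (expR (\sum_(j < p) tnth d j))%:E).
apply: le_trans (h _ _ _ _ _) _.
- by move=> t _; rewrite lee_fin expR_ge0.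
- exact: meas_integrand.
- by move=> t _; rewrite lee_fin expR_ge0.
- exact: measurable_cst.
- apply: filterS ae_stiefel => t st _.
  rewrite lee_fin ler_expR; apply: ler_sum => j _.
  rewrite -[X in _ <= X]mulr1; apply: ler_wpM2l; first exact: ltW.
  have := col_bound st (widen_ord hnp j) j.
  by rewrite mx_ofE /diag_entry => /(le_trans (ler_norm _)).
have := integral_cst mu measurableT (expR (\sum_(j < p) tnth d j))%:E.
rewrite /cst => ->.
rewrite [X in (_ * X <= _)%E](_ : _ = 1%E); last exact: probability_setT.
by rewrite mule1.
Qed.

Lemma F_lower eps (d : p.-tuple R) : 0 < eps -> posT d ->
  ((expR ((1 - eps) * \sum_(j < p) tnth d j))%:E * mu (Uset hnp (1 - eps))
     <= hyp0F1 hnp mu d)%E.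
Proof.
move=> e0 pd; rewrite /hyp0F1.
have f0 : forall t : rmat R n p, setT t ->
   (0 <= (expR (\sum_(j < p) tnth d j * diag_entry hnp t j))%:E)%E.
  by move=> t _; rewrite lee_fin expR_ge0.
have hs := ge0_subset_integral mu (mUset hnp (1 - eps)) measurableT
  (meas_integrand d) f0 (@subsetT _ _).
apply: le_trans hs.
have := integral_cst mu (mUset hnp (1 - eps)) (expR ((1 - eps) * \sum_(j < p) tnth d j))%:E.
rewrite /cst => <-.
apply: le_int_nm => t ht; first by rewrite lee_fin expR_ge0.
rewrite lee_fin ler_expR mulr_sumr; apply: ler_sum => j _.
have := ht j; rewrite in_itv /= andbT => hj.
by rewrite mulrC ler_wpM2l // ltW.
Qed.

End F01.

Section Final.
Local Open Scope ring_scope.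
Variables (R : realType) (n p : nat) (hnp : (p <= n)%N).
Variable (mu : probability (rmat R n p) R).
Hypothesis hmu : stiefel_haar mu.

Lemma cU_pos eps : 0 < eps ->
  0 < fine (mu (Uset hnp (1 - eps))) /\
  mu (Uset hnp (1 - eps)) = (fine (mu (Uset hnp (1 - eps))))%:E.
Proof.
move=> e0.
have h1 := U_pos hnp hmu e0.
have h2 := probability_le1 mu (mUset hnp (1 - eps)).
move: h1 h2; case: (mu (Uset hnp (1 - eps))) => [r| |] //=.
Qed.

Lemma F_bounds eps (d : p.-tuple R) : 0 < eps -> posT d ->
  let F := fine (hyp0F1 hnp mu d) in
  fine (mu (Uset hnp (1 - eps))) * expR ((1 - eps) * \sum_(j < p) tnth d j) <= F
  /\ F <= expR (\sum_(j < p) tnth d j).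
Proof.
move=> e0 pd /=.
have [c0 cE] := cU_pos e0.
have lo := F_lower hnp mu e0 pd.
have up := F_upper hnp hmu pd.
rewrite cE -EFinM in lo.
move: lo up; case: (hyp0F1 hnp mu d) => [r| |] //=.
  by rewrite !lee_fin mulrC => -> ->.
Qed.
End Final.
Section Final2.
Local Open Scope ring_scope.
Variables (R : realType) (n p : nat) (hnp : (p <= n)%N).
Variable (mu : probability (rmat R n p) R).
Hypothesis hmu : stiefel_haar mu.
Variables (nu : R) (eta : p.-tuple R).
Hypothesis hnu : 0 < nu.

Lemma sum_lin (d : p.-tuple R) (c : R) :
  \sum_(j < p) (nu * (nth 0 eta j - c)) * tnth d j =
  nu * (\sum_(j < p) tnth eta j * tnth d j) - c * (\sum_(j < p) tnth d j) * nu.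
Proof.
rewrite !mulr_sumr mulr_suml -sumrB; apply: eq_bigr => j _.
rewrite (tnth_nth 0 eta); ring.
Qed.

Lemma g_ge0 d : posT d -> 0 <= g_fun hnp mu nu eta d.
Proof. by move=> _; rewrite /g_fun divr_ge0 ?expR_ge0 ?powR_ge0. Qed.

Lemma g_upper eps (d : p.-tuple R) : 0 < eps -> posT d ->
  g_fun hnp mu nu eta d <=
  (fine (mu (Uset hnp (1 - eps))) `^ nu)^-1 *
  expR (\sum_(j < p) (nu * (nth 0 eta j - (1 - eps))) * tnth d j).
Proof.
move=> e0 pd.
have [c0 _] := cU_pos hnp hmu e0.
have [lo up] := F_bounds hnp hmu e0 pd.
set F := fine (hyp0F1 hnp mu d) in lo up *.
set c := fine (mu (Uset hnp (1 - eps))) in c0 lo *.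
set S := \sum_(j < p) tnth d j in lo up *.
have L0 : 0 < c * expR ((1 - eps) * S) by rewrite mulr_gt0 ?expR_gt0.
have F0 : 0 < F := lt_le_trans L0 lo.
have hp : (c * expR ((1 - eps) * S)) `^ nu <= F `^ nu.
  by apply: ge0_ler_powR => //; rewrite ?nnegrE ltW.
have Lp0 : 0 < (c * expR ((1 - eps) * S)) `^ nu by apply: powR_gt0.
rewrite /g_fun -/F sum_lin.
have hle : expR (nu * \sum_(j < p) tnth eta j * tnth d j) / F `^ nu <=
   expR (nu * \sum_(j < p) tnth eta j * tnth d j) / (c * expR ((1 - eps) * S)) `^ nu.
  rewrite ler_pM2l ?expR_gt0 // lef_pV2 //; rewrite posrE.
  exact: lt_le_trans hp.
apply: (le_trans hle). rewrite (powRM _ (ltW c0)) ?expR_ge0 // -expRM invfM.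
rewrite expRD expRN /S le_eqVlt; apply/orP; left; apply/eqP; ring.
Qed.

Lemma g_lower (d : p.-tuple R) : posT d ->
  expR (\sum_(j < p) (nu * (nth 0 eta j - 1)) * tnth d j) <= g_fun hnp mu nu eta d.
Proof.
move=> pd.
have e0 : 0 < 1 / 2 :> R by rewrite divr_gt0.
have [c0 _] := cU_pos hnp hmu e0.
have [lo up] := F_bounds hnp hmu e0 pd.
set F := fine (hyp0F1 hnp mu d) in lo up *.
set c := fine (mu (Uset hnp (1 - 1 / 2))) in c0 lo *.
set S := \sum_(j < p) tnth d j in lo up *.
have L0 : 0 < c * expR ((1 - 1 / 2) * S) by rewrite mulr_gt0 ?expR_gt0.
have F0 : 0 < F := lt_le_trans L0 lo.
have hp : F `^ nu <= (expR S) `^ nu.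
  by apply: ge0_ler_powR => //; rewrite ?nnegrE ?expR_ge0 // ltW.
have Fp0 : 0 < F `^ nu by apply: powR_gt0.
rewrite /g_fun -/F sum_lin mul1r expRD expRN.
rewrite ler_pM2l ?expR_gt0 // expRM lef_pV2 // ?posrE ?powR_gt0 ?expR_gt0 //.
Qed.
End Final2.
Unset Implicit Arguments.
Local Open Scope ring_scope.

Theorem theorem2 (R : realType) (n p : nat) (hnp : (p <= n)%N)
  (mu : probability (rmat R n p) R) (hmu : stiefel_haar mu)
  (nu : R) (hnu : 0 < nu) (eta : p.-tuple R) :
  (int_Rplus (fun d : p.-tuple R => (g_fun hnp mu nu eta d)%:E) < +oo)%E <->
  (forall j : 'I_p, tnth eta j < 1).
Proof.
split.
- move=> hfin j; rewrite ltNge; apply/negP => hj.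
  have hinf : int_Rplus (fun d : p.-tuple R =>
      ((1 : R) * expR (\sum_(k < p) (fun k => nu * (nth 0 eta k - 1)) k * tnth d k))%:E)
      = +oo%E.
    rewrite (@int_Rplus_exp R p (fun k => nu * (nth 0 eta k - 1)) 1) // mul1e.
    apply: (@prodJ_inf R p (fun k => nu * (nth 0 eta k - 1)) j (ltn_ord j)).
    by rewrite -(tnth_nth 0 eta j) mulr_ge0 ?subr_ge0 // ltW.
  have hle := int_Rplus_le (f := fun d : p.-tuple R =>
      ((1 : R) * expR (\sum_(k < p) (fun k => nu * (nth 0 eta k - 1)) k * tnth d k))%:E)
    (g := fun d : p.-tuple R => (g_fun hnp mu nu eta d)%:E).
  have h2 := hle (fun d _ => ltac:(by rewrite lee_fin mul1r expR_ge0))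
    (fun d pd => ltac:(by rewrite lee_fin mul1r; exact: g_lower)).
  rewrite hinf in h2.
  by have := le_lt_trans h2 hfin; rewrite ltxx.
- move=> hlt.
  set m := \big[Num.min/1]_(j < p) (1 - tnth eta j).
  have m0 : 0 < m.
    rewrite /m; elim/big_ind: _ => //; first by move=> x y x0 y0; rewrite lt_min x0.
    by move=> j _; rewrite subr_gt0.
  have mle : forall j, m <= 1 - tnth eta j.
    by move=> j; rewrite /m (bigD1 j) //= ge_min lexx.
  set eps := m / 2.
  have e0 : 0 < eps by rewrite divr_gt0.
  have em : eps < m by rewrite /eps ltr_pdivrMr // ltr_pMr // ltr1n.
  set C := (fine (mu (Uset hnp (1 - eps))) `^ nu)^-1.
  have C0 : 0 <= C by rewrite invr_ge0 powR_ge0.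
  have hle := int_Rplus_le (f := fun d : p.-tuple R => (g_fun hnp mu nu eta d)%:E)
    (g := fun d : p.-tuple R =>
      (C * expR (\sum_(k < p) (fun k => nu * (nth 0 eta k - (1 - eps))) k * tnth d k))%:E).
  apply: le_lt_trans (hle _ _) _.
  + by move=> d pd; rewrite lee_fin g_ge0.
  + by move=> d pd; rewrite lee_fin; exact: g_upper.
  rewrite (@int_Rplus_exp R p (fun k => nu * (nth 0 eta k - (1 - eps))) C) //.
  have Pf := @prodJ_fin R p (fun k => nu * (nth 0 eta k - (1 - eps))).
  have P0 := @prodJ_gt0 R p (fun k => nu * (nth 0 eta k - (1 - eps))).
  have : (\prod_(j < p) J (nu * (nth 0 eta j - (1 - eps)))%R < +oo)%E.
    apply: Pf => k kp; rewrite pmulr_rlt0 //.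
    have := mle (Ordinal kp); rewrite (tnth_nth 0) /=; lra.
  by move=> hP; apply: lte_mul_pinfty => //; rewrite lee_fin.
Qed.
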